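(* Let $M\in\mathbb{R}^{n\times n}$ be symmetric with eigenvalues ordered so that $|\lambda_1|\ge|\lambda_2|\ge\cdots$, where $\lambda=\lambda_1>0$ and $\lambda_1>|\lambda_2|$. Let $u$ be the unit leading eigenvector, $l_2=|\lambda_2|/\lambda$, and $0<\theta\le\frac1{40}(1-l_2)^{3/2}$. Let $\{S^{(\ell)}\}_{\ell\ge1}$ be i.i.d. random $n\times n$ matrices such that: - $\mathbb{E}[S^{(\ell)}]=M$; - $\|S^{(\ell)}-M\|_2\le\theta\|M\|_2$; - $S^{(\ell)}$ is almost surely non-singular; - no proper subspace $V$ satisfies $S^{(\ell)}V\subseteq V$ almost surely. Define $\mathsf G=\{\mathbf x\in\mathsf P_n: d(\mathbf x,\mathbf u)\le 2\theta/(1-l_2)\}$, where $\mathbf u$ is the class of $u$. Then: 1. For any $\mathbf x\in\mathsf G$, $S^{(\ell)}\mathbf x\in\mathsf G$. 2. With $\rho\equiv1-\frac45(1-l_2)\in(0,1)$, for any $\mathbf x\ne\mathbf y\in\mathsf G$, $$\mathbb{E}\,d(S^{(\ell)}\mathbf x,S^{(\ell)}\mathbf y)\le\rho\,d(\mathbf x,\mathbf y).$$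
   Context: $\mathsf P_n$ is the projective space (unit vectors of $\mathbb{R}^n$ modulo sign), with metric $d(\mathbf x,\mathbf y)=\sqrt{1-\langle x,y\rangle^2}$ for unit representatives $x,y$. An invertible matrix $S$ acts on $\mathsf P_n$ by mapping the class of $x$ to the class of $Sx/\|Sx\|$. $\|\cdot\|_2$ is the operator norm. *)

(* Defs.v *)
From HB Require Import structures.
From mathcomp Require Import all_boot all_order all_algebra.
From mathcomp Require Import all_classical all_reals all_analysis.
Set Implicit Arguments. Unset Strict Implicit. Unset Printing Implicit Defensive.
Import Order.TTheory GRing.Theory Num.Theory.
Local Open Scope ring_scope.

Section Defs.
Variables (R : realType) (n : nat).

Definition dotv (x y : 'cV[R]_n) : R := \sum_i x i 0 * y i 0.
Definition vnorm (x : 'cV[R]_n) : R := Num.sqrt (dotv x x).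

Definition opnorm (A : 'M[R]_n) : R :=
  sup [set vnorm (A *m x) | x in [set x : 'cV[R]_n | vnorm x = 1]].

(* Points of P_n are represented by unit vectors; all notions below are
   invariant under x |-> -x. *)
Definition unitv (x : 'cV[R]_n) : Prop := vnorm x = 1.

Definition pdist (x y : 'cV[R]_n) : R := Num.sqrt (1 - dotv x y ^+ 2).

Definition pact (S : 'M[R]_n) (x : 'cV[R]_n) : 'cV[R]_n :=
  (vnorm (S *m x))^-1 *: (S *m x).

(* V (row space of a matrix, column vectors = transposed rows) is invariant
   under x |-> S x *)
Definition invariant_sub (V S : 'M[R]_n) : bool := (V *m S^T <= V)%MS.

Definition nontriv_proper_subsp (V : 'M[R]_n) : bool := (0 < \rank V)%N && (\rank V < n)%N.

End Defs.

(* Main.v *)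
Require Import Defs.
From HB Require Import structures.
From mathcomp Require Import all_boot all_order all_algebra.
From mathcomp Require Import all_classical all_reals all_analysis.
From mathcomp Require Import ring lra.
Import Order.TTheory GRing.Theory Num.Theory.
Set Implicit Arguments. Unset Strict Implicit. Unset Printing Implicit Defensive.
Local Open Scope ring_scope.

Section Lin.
Variables (R : realType) (m : nat).
Implicit Types (x y z v w : 'cV[R]_m) (a b k : R).
Local Notation dot := (@dotv R m).

Lemma dotvC x y : dot x y = dot y x.
Proof. by rewrite /dotv; apply: eq_bigr => i _; rewrite mulrC. Qed.
Lemma dotvDl x y z : dot (x + y) z = dot x z + dot y z.
Proof. by rewrite /dotv -big_split; apply: eq_bigr => i _; rewrite mxE mulrDl. Qed.
Lemma dotvZl a x y : dot (a *: x) y = a * dot x y.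
Proof. by rewrite /dotv mulr_sumr; apply: eq_bigr => i _; rewrite mxE mulrA. Qed.
Lemma dotvNl x y : dot (- x) y = - dot x y.
Proof. by rewrite -scaleN1r dotvZl mulN1r. Qed.
Lemma dotvBl x y z : dot (x - y) z = dot x z - dot y z.
Proof. by rewrite dotvDl dotvNl. Qed.
Lemma dotvDr x y z : dot z (x + y) = dot z x + dot z y.
Proof. by rewrite dotvC dotvDl !(dotvC z). Qed.
Lemma dotvZr a x y : dot y (a *: x) = a * dot y x.
Proof. by rewrite dotvC dotvZl dotvC. Qed.
Lemma dotvBr x y z : dot z (x - y) = dot z x - dot z y.
Proof. by rewrite dotvC dotvBl !(dotvC z). Qed.
Lemma dotv0l x : dot 0 x = 0.
Proof. by rewrite -(scale0r (0 : 'cV[R]_m)) dotvZl mul0r. Qed.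
Lemma dotv0r x : dot x 0 = 0.
Proof. by rewrite dotvC dotv0l. Qed.

Lemma dotv_ge0 x : 0 <= dot x x.
Proof. by apply: sumr_ge0 => i _; rewrite -expr2 sqr_ge0. Qed.

Lemma dotv_eq0 x : dot x x = 0 -> x = 0.
Proof.
move=> h; apply/matrixP => i j; rewrite ord1 mxE.
have hg : forall i : 'I_m, xpredT i -> 0 <= x i 0 * x i 0.
  by move=> k _; rewrite -expr2 sqr_ge0.
have := @psumr_eq0P R 'I_m xpredT (fun i => x i 0 * x i 0) hg h i isT.
by move=> /eqP; rewrite mulf_eq0 orbb => /eqP.
Qed.

Lemma dotv_mx x y : dot x y = (x^T *m y) 0 0.
Proof. by rewrite /dotv mxE; apply: eq_bigr => i _; rewrite mxE. Qed.

Lemma dotv_mulmx (A : 'M[R]_m) x y : dot (A *m x) y = dot x (A^T *m y).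
Proof. by rewrite !dotv_mx trmx_mul mulmxA. Qed.

Lemma sqD2 a b x y : dot (a *: x + b *: y) (a *: x + b *: y) =
  a ^+ 2 * dot x x + 2 * a * b * dot x y + b ^+ 2 * dot y y.
Proof.
rewrite !dotvDl !dotvDr !dotvZl !dotvZr (dotvC y x); ring.
Qed.

Lemma CS x y : dot x y ^+ 2 <= dot x x * dot y y.
Proof.
have [y0|] := eqVneq (dot y y) 0.
  by rewrite (dotv_eq0 y0) dotv0r dotv0l expr0n /= mulr0.
move=> yn0; have yp : 0 < dot y y by rewrite lt_def yn0 dotv_ge0.
have := dotv_ge0 (dot y y *: x + (- dot x y) *: y); rewrite sqD2 => h.
have : 0 <= dot y y * (dot x x * dot y y - dot x y ^+ 2) by nra.
by rewrite pmulr_rge0 // subr_ge0.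
Qed.

Lemma gram x y k : dot x x * dot y y - dot x y ^+ 2 <=
   dot x x * dot (y - k *: x) (y - k *: x).
Proof.
have -> : y - k *: x = 1 *: y + (- k) *: x by rewrite scale1r scaleNr.
rewrite sqD2 (dotvC y x).
have : 0 <= (k * dot x x - dot x y) ^+ 2 by rewrite sqr_ge0.
move=> h; rewrite -subr_ge0; apply: le_trans h _; rewrite le_eqVlt; apply/orP; left; apply/eqP; ring.
Qed.

Lemma vnorm_ge0 x : 0 <= vnorm x.
Proof. exact: sqrtr_ge0. Qed.
Lemma vnorm_sq x : vnorm x ^+ 2 = dot x x.
Proof. by rewrite /vnorm sqr_sqrtr // dotv_ge0. Qed.

Lemma dot_le_norm x y : dot x y <= vnorm x * vnorm y.
Proof.
have h := CS x y; rewrite -!vnorm_sq -exprMn in h.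
have := mulr_ge0 (vnorm_ge0 x) (vnorm_ge0 y); nra.
Qed.

Lemma vnormD x y : vnorm (x + y) <= vnorm x + vnorm y.
Proof.
rewrite -(ler_pXn2r (n := 2)) ?nnegrE ?addr_ge0 ?vnorm_ge0 //.
rewrite vnorm_sq dotvDl !dotvDr (dotvC y x) sqrrD !vnorm_sq.
by have := dot_le_norm x y; lra.
Qed.

Lemma vnormZ a x : vnorm (a *: x) = `|a| * vnorm x.
Proof.
by rewrite /vnorm dotvZl dotvZr mulrA -expr2 sqrtrM ?sqr_ge0 // sqrtr_sqr.
Qed.

Lemma vnorm_le (x y : 'cV[R]_m) : dot x x <= dot y y -> vnorm x <= vnorm y.
Proof. by move=> h; rewrite /vnorm ler_sqrt // dotv_ge0. Qed.

End Lin.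
Section Real.
Variables (R : realType) (l th r lam : R).
Hypotheses (Hl0 : 0 <= l) (Hl1 : l < 1) (Hth : 0 < th) (Hr : r * (1 - l) = 2 * th)
  (Hth40 : th <= (1 - l) / 40) (Hr2 : r ^+ 2 <= (1 - l) / 400) (Hlam : 0 < lam).
Ltac hyps := have hl0 := Hl0; have hl1 := Hl1; have hth := Hth; have hr := Hr;
  have hth40 := Hth40; have hr2 := Hr2; have hlam := Hlam.

Lemma r_pos : 0 < r.
Proof. hyps. have h : 0 < r * (1 - l) by rewrite hr mulr_gt0.
by move: h; rewrite pmulr_lgt0 // subr_gt0. Qed.

Lemma r_th : th <= r.
Proof. hyps. have := r_pos => rp. have h2 : r - r * l = 2 * th by rewrite -hr; ring.
have : 0 <= r * l by rewrite mulr_ge0 // ltW. lra. Qed.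

Lemma sqnorm (c : R) : `|c| ^+ 2 = c ^+ 2.
Proof. exact: real_normK (num_real c). Qed.

Lemma sq_le (x y : R) : 0 <= x -> x <= y -> x ^+ 2 <= y ^+ 2.
Proof. by move=> x0 xy; rewrite !expr2 ler_pM. Qed.

Lemma abs_le_sq (d t : R) : 0 <= t -> d ^+ 2 <= t ^+ 2 -> `|d| <= t.
Proof. move=> t0; rewrite -(sqnorm d) => h; have := normr_ge0 d; nra. Qed.

Lemma abs_ge_sq (c : R) : c ^+ 2 <= 1 -> c ^+ 2 <= `|c|.
Proof.
move=> h; rewrite -(sqnorm c) in h *.
have := normr_ge0 c; nra.
Qed.

Lemma R1 (c A Qn : R) : c ^+ 2 <= 1 -> 1 - c ^+ 2 <= r ^+ 2 ->
  `|A - lam * c| <= th * lam -> 0 <= Qn -> Qn <= lam * (l * r + th) ->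
  0 < A ^+ 2 + Qn ^+ 2 /\ Qn ^+ 2 <= r ^+ 2 * (A ^+ 2 + Qn ^+ 2).
Proof.
move=> c1 cr hA hQ0 hQ; hyps.
have hc : 1 - r ^+ 2 <= `|c| by have := abs_ge_sq c1; lra.
have rp := r_pos.
have hA2 : lam * (1 - r ^+ 2 - th) <= `|A|.
  move: hA hc; rewrite ler_norml => /andP[h1 h2].
  have w0 : 0 < 1 - r ^+ 2 - th by lra.
  case: (ler0P c) => hc0 hc.
    have : lam * (1 - r ^+ 2) <= lam * (- c) by rewrite ler_pM2l.
    case: (ler0P A) => hA0; nra.
  have : lam * (1 - r ^+ 2) <= lam * c by rewrite ler_pM2l.
  case: (ler0P A) => hA0; nra.
have w0 : 0 < 1 - r ^+ 2 - th by lra.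
have hA3 : (lam * (1 - r ^+ 2 - th)) ^+ 2 <= A ^+ 2.
  rewrite -(sqnorm A); apply: sq_le; nra.
have hlr : l * r = r - 2 * th by nra.
have hQ2 : Qn <= lam * (r - th).
  have : l * r + th = r - th by lra.
  by move=> <-.
have key : r - th <= r * (1 - r ^+ 2 - th).
  have : r ^+ 2 + th <= (1 - l) / 2 by lra.
  nra.
split; first by nra.
have : Qn ^+ 2 <= (lam * (r * (1 - r ^+ 2 - th))) ^+ 2.
  apply: sq_le; nra.
nra.
Qed.

Lemma R2 (cx cy B N K Z : R) : cx ^+ 2 <= 1 -> 1 - cx ^+ 2 <= r ^+ 2 ->
  cy ^+ 2 <= 1 -> 1 - cy ^+ 2 <= r ^+ 2 ->
  `|B - lam * cy| <= th * lam -> 0 <= Z -> N <= (l + th) ^+ 2 * lam ^+ 2 * Z ->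
  cx ^+ 2 * Z <= K ->
  N <= (1 - 4 / 5 * (1 - l)) ^+ 2 * K * B ^+ 2.
Proof.
move=> cx1 cxr cy1 cyr hB hZ hN hK; hyps.
have hcx : 1 - r ^+ 2 <= `|cx| by have := abs_ge_sq cx1; lra.
have hcy : 1 - r ^+ 2 <= `|cy| by have := abs_ge_sq cy1; lra.
have rp := r_pos.
have hB2 : lam * (1 - r ^+ 2 - th) <= `|B|.
  move: hB hcy; rewrite ler_norml => /andP[h1 h2].
  have w0 : 0 < 1 - r ^+ 2 - th by lra.
  case: (ler0P cy) => hc0 hc.
    have : lam * (1 - r ^+ 2) <= lam * (- cy) by rewrite ler_pM2l.
    case: (ler0P B) => hA0; nra.
  have : lam * (1 - r ^+ 2) <= lam * cy by rewrite ler_pM2l.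
  case: (ler0P B) => hA0; nra.
set rho := 1 - 4 / 5 * (1 - l).
have rho0 : 0 < rho by rewrite /rho; lra.
have w0 : 0 < 1 - r ^+ 2 - th by lra.
have key : l + th <= rho * ((1 - r ^+ 2 - th) * (1 - r ^+ 2)).
  have h1 : 1 - 2 * r ^+ 2 - th <= (1 - r ^+ 2 - th) * (1 - r ^+ 2) by nra.
  have h2 : rho * (1 - 2 * r ^+ 2 - th) <= rho * ((1 - r ^+ 2 - th) * (1 - r ^+ 2)).
    by rewrite ler_pM2l.
  have h3 : rho - 2 * r ^+ 2 - th <= rho * (1 - 2 * r ^+ 2 - th).
    have : rho <= 1 by rewrite /rho; lra.
    nra.
  rewrite /rho in h2 h3 *; lra.
have k2 : (l + th) * lam <= rho * (`|B| * `|cx|).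
  have : lam * (1 - r ^+ 2 - th) * (1 - r ^+ 2) <= `|B| * `|cx|.
    by apply: ler_pM => //; nra.
  nra.
have k3 : ((l + th) * lam) ^+ 2 <= (rho * (`|B| * `|cx|)) ^+ 2.
  apply: sq_le; nra.
rewrite !exprMn !sqnorm in k3.
have : (l + th) ^+ 2 * lam ^+ 2 * Z <= rho ^+ 2 * (B ^+ 2 * cx ^+ 2) * Z.
  by apply: ler_wpM2r => //; rewrite -exprMn.
have : rho ^+ 2 * B ^+ 2 * (cx ^+ 2 * Z) <= rho ^+ 2 * B ^+ 2 * K.
  by apply: ler_wpM2l => //; rewrite mulr_ge0 // sqr_ge0.
nra.
Qed.

End Real.

Lemma sqnormG (R : realType) (c : R) : `|c| ^+ 2 = c ^+ 2.
Proof. exact: real_normK (num_real c). Qed.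
Lemma abs_le_sqG (R : realType) (d t : R) : 0 <= t -> d ^+ 2 <= t ^+ 2 -> `|d| <= t.
Proof. move=> t0; rewrite -(sqnormG d) => h; have := normr_ge0 d; nra. Qed.

Section Geo.
Variables (R : realType) (m : nat) (M E : 'M[R]_m) (u : 'cV[R]_m) (lam l th r : R).
Local Notation dot := (@dotv R m).
Hypotheses (Hu : dot u u = 1) (HMs : M^T = M) (HMu : M *m u = lam *: u)
  (HMp : forall z, dot z u = 0 -> vnorm (M *m z) <= l * lam * vnorm z)
  (HE : forall v, vnorm (E *m v) <= th * lam * vnorm v).
Hypotheses (Hl0 : 0 <= l) (Hl1 : l < 1) (Hth : 0 < th) (Hr : r * (1 - l) = 2 * th)
  (Hth40 : th <= (1 - l) / 40) (Hr2 : r ^+ 2 <= (1 - l) / 400) (Hlam : 0 < lam).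

Local Notation S := (M + E).

Lemma dot_lin (p q p' q' : R) (x y x' y' : 'cV[R]_m) :
  dot (p *: x + q *: y) (p' *: x' + q' *: y') =
  p * p' * dot x x' + p * q' * dot x y' + q * p' * dot y x' + q * q' * dot y y'.
Proof. rewrite !dotvDl !dotvDr !dotvZl !dotvZr; ring. Qed.

Lemma subE (x y : 'cV[R]_m) (k : R) : y - k *: x = 1 *: y + (- k) *: x.
Proof. by rewrite scale1r scaleNr. Qed.

Lemma dotMu x : dot (M *m x) u = lam * dot x u.
Proof. by rewrite dotv_mulmx HMs HMu dotvZr. Qed.

Lemma vnorm1 x : dot x x = 1 -> vnorm x = 1.
Proof. by rewrite /vnorm => ->; rewrite sqrtr1. Qed.

Lemma Eu x : `|dot (E *m x) u| <= th * lam * vnorm x.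
Proof.
have := CS (E *m x) u; rewrite Hu mulr1 -vnorm_sq => h.
apply: abs_le_sqG; first by rewrite !mulr_ge0 ?vnorm_ge0 // ltW.
apply: le_trans h _; apply: sq_le; [exact: vnorm_ge0 | exact: HE].
Qed.

Lemma unit_c x : dot x x = 1 -> dot x u ^+ 2 <= 1.
Proof. by move=> hx; have := CS x u; rewrite hx Hu mulr1. Qed.

Definition inG x := dot x x = 1 /\ 1 - dot x u ^+ 2 <= r ^+ 2.

Lemma geo1 x : inG x ->
  0 < dot (S *m x) (S *m x) /\
  1 - dot (S *m x) u ^+ 2 / dot (S *m x) (S *m x) <= r ^+ 2.
Proof.
move=> [hx hxr].
set c := dot x u; set a := S *m x; set e := dot (E *m x) u.
have hA : dot a u = lam * c + e by rewrite /a mulmxDl dotvDl dotMu.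
set A := dot a u.
set z := x - c *: u.
have hz : dot z u = 0 by rewrite /z dotvBl dotvZl Hu mulr1 subrr.
have hzz : dot z z = 1 - c ^+ 2.
  rewrite /z subE dot_lin hx Hu (dotvC u x) -/c; ring.
have r0 : 0 <= r by have := r_th Hl0 Hl1 Hth Hr Hth40 Hr2 Hlam; have := Hth; lra.
have hzr : vnorm z <= r.
  have := abs_le_sqG r0 (_ : vnorm z ^+ 2 <= r ^+ 2).
  rewrite ger0_norm ?vnorm_ge0 //; apply; by rewrite vnorm_sq hzz.
set q := a - A *: u.
have hq : q = M *m z + (E *m x - e *: u).
  rewrite /q /z /A hA mulmxBr -scalemxAr HMu /a mulmxDl.
  move: (M *m x) (E *m x) => p1 p2; apply/matrixP => i j; rewrite !mxE; ring.
have hEe : vnorm (E *m x - e *: u) <= th * lam.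
  apply: le_trans (_ : vnorm (E *m x) <= _).
    apply: vnorm_le; rewrite subE dot_lin Hu (dotvC u) -/e.
    have := sqr_ge0 e; rewrite expr2 => h; lra.
  by have := HE x; rewrite (vnorm1 hx) mulr1.
have hqn : vnorm q <= lam * (l * r + th).
  rewrite hq; apply: le_trans (vnormD _ _) _.
  have := HMp hz; have := Hl0; have := Hlam => h1 h2 h3.
  have : l * lam * vnorm z <= l * lam * r by apply: ler_wpM2l => //; rewrite mulr_ge0 // ltW.
  lra.
have hqu : dot q u = 0 by rewrite /q dotvBl dotvZl Hu mulr1 -/A subrr.
have haa : dot a a = A ^+ 2 + vnorm q ^+ 2.
  have -> : a = 1 *: q + A *: u by rewrite scale1r /q subrK.
  rewrite dot_lin hqu (dotvC u q) hqu Hu vnorm_sq; ring.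
have hAe : `|A - lam * c| <= th * lam.
  by rewrite /A hA addrC addKr; have := Eu x; rewrite (vnorm1 hx) mulr1.
have [h1 h2] := R1 Hl0 Hl1 Hth Hr Hth40 Hr2 Hlam (unit_c hx) hxr hAe (vnorm_ge0 q) hqn.
rewrite haa; split => //.
have -> : 1 - A ^+ 2 / (A ^+ 2 + vnorm q ^+ 2) = vnorm q ^+ 2 / (A ^+ 2 + vnorm q ^+ 2).
  by field; rewrite gt_eqF.
by rewrite ler_pdivrMr // mulrC.
Qed.

Lemma pact_dot (A : 'M[R]_m) x v :
  dot (pact A x) v = dot (A *m x) v / vnorm (A *m x).
Proof. by rewrite /pact dotvZl mulrC. Qed.

Lemma pact_dot2 (A : 'M[R]_m) x y :
  dot (pact A x) (pact A y) =
  dot (A *m x) (A *m y) / (vnorm (A *m x) * vnorm (A *m y)).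
Proof. by rewrite /pact dotvZl dotvZr invfM; ring. Qed.

Lemma vnorm_gt0 v : 0 < dot v v -> 0 < vnorm v.
Proof. by move=> h; rewrite /vnorm sqrtr_gt0. Qed.

Lemma geo1' x : inG x -> inG (pact S x).
Proof.
move=> hx; have [h1 h2] := geo1 hx.
have hv := vnorm_gt0 h1.
split.
  rewrite pact_dot2 -expr2 vnorm_sq; by field; rewrite gt_eqF.
by rewrite pact_dot expr_div_n vnorm_sq.
Qed.

Lemma geo2 x y : inG x -> inG y ->
  1 - dot (pact S x) (pact S y) ^+ 2 <=
  (1 - 4 / 5 * (1 - l)) ^+ 2 * (1 - dot x y ^+ 2).
Proof.
move=> hx hy; have [ha _] := geo1 hx; have [hb _] := geo1 hy.
case: hx => hx hxr; case: hy => hy hyr.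
set a := S *m x; set b := S *m y.
set cx := dot x u; set cy := dot y u; set g := dot x y.
have r0 : 0 <= r by have := r_th Hl0 Hl1 Hth Hr Hth40 Hr2 Hlam; have := Hth; lra.
have hcx : cx != 0.
  apply/eqP => c0; move: hxr; rewrite -/cx c0 expr0n /=.
  have := Hr2; have := Hl0; lra.
set s := cy / cx; set z := y - s *: x.
have hzu : dot z u = 0.
  by rewrite /z dotvBl dotvZl -/cx -/cy /s; field.
have hZ : dot z z = 1 - 2 * s * g + s ^+ 2.
  rewrite /z subE dot_lin hx hy (dotvC y x) -/g; ring.
have gram3 : (cy - g * cx) ^+ 2 <= (1 - g ^+ 2) * (1 - cx ^+ 2).
  have := CS (y - g *: x) (u - cx *: x).
  rewrite !subE !dot_lin hx hy Hu (dotvC y x) (dotvC u x) -/g -/cx -/cy.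
  have -> : 1 * 1 * cy + 1 * - cx * g + - g * 1 * cx + - g * - cx * 1 = cy - g * cx by ring.
  have -> : 1 * 1 * 1 + 1 * - g * g + - g * 1 * g + - g * - g * 1 = 1 - g ^+ 2 by ring.
  have -> : 1 * 1 * 1 + 1 * - cx * cx + - cx * 1 * cx + - cx * - cx * 1 = 1 - cx ^+ 2 by ring.
  by [].
have hK : cx ^+ 2 * dot z z <= 1 - g ^+ 2.
  have -> : cx ^+ 2 * dot z z = cx ^+ 2 - 2 * cx * cy * g + cy ^+ 2.
    by rewrite hZ /s; field.
  nra.
have hSz : S *m z = b - s *: a by rewrite /z mulmxBr -scalemxAr.
have hSzn : vnorm (S *m z) <= (l + th) * lam * vnorm z.
  rewrite mulmxDl; apply: le_trans (vnormD _ _) _.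
  have := HMp hzu; have := HE z; lra.
set N := dot (b - s *: a) (b - s *: a).
have hN : N <= (l + th) ^+ 2 * lam ^+ 2 * dot z z.
  rewrite /N -hSz -vnorm_sq -vnorm_sq -!exprMn; apply: sq_le; first exact: vnorm_ge0.
  exact: hSzn.
set B := dot b u.
have hB : `|B - lam * cy| <= th * lam.
  rewrite /B /b mulmxDl dotvDl dotMu -/cy addrC addKr.
  by have := Eu y; rewrite (vnorm1 hy) mulr1.
have hR2 := R2 Hl0 Hl1 Hth Hr Hth40 Hr2 Hlam (unit_c hx) hxr (unit_c hy) hyr hB
  (dotv_ge0 z) hN hK.
have hgr := gram a b s.
have hbB : B ^+ 2 <= dot b b by have := CS b u; rewrite Hu mulr1.
have hK0 : 0 <= 1 - g ^+ 2 by have := CS x y; rewrite hx hy mulr1 -/g; lra.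
set rho := 1 - 4 / 5 * (1 - l).
rewrite -/rho in hR2.
have hva := vnorm_gt0 ha; have hvb := vnorm_gt0 hb.
rewrite pact_dot2 -/a -/b expr_div_n exprMn !vnorm_sq.
set sa := dot a a; set sb := dot b b; set dab := dot a b.
have hsab : 0 < sa * sb by rewrite mulr_gt0.
have -> : 1 - dab ^+ 2 / (sa * sb) = (sa * sb - dab ^+ 2) / (sa * sb).
  by field; rewrite !gt_eqF.
rewrite ler_pdivrMr //.
apply: le_trans hgr _; rewrite -/sa -/N.
have h1 : sa * N <= sa * (rho ^+ 2 * (1 - g ^+ 2) * B ^+ 2) by rewrite ler_wpM2l // ltW.
apply: le_trans h1 _.
have h2 : 0 <= rho ^+ 2 * (1 - g ^+ 2) by rewrite mulr_ge0 // sqr_ge0.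
have h3 : rho ^+ 2 * (1 - g ^+ 2) * B ^+ 2 <= rho ^+ 2 * (1 - g ^+ 2) * sb by rewrite ler_wpM2l.
have : sa * (rho ^+ 2 * (1 - g ^+ 2) * B ^+ 2) <= sa * (rho ^+ 2 * (1 - g ^+ 2) * sb)
  by rewrite ler_wpM2l // ltW.
move=> h4; apply: le_trans h4 _; rewrite le_eqVlt; apply/orP; left; apply/eqP; ring.
Qed.

End Geo.

Section Opn.
Variables (R : realType) (m : nat).
Local Notation dot := (@dotv R m).

Lemma entry_dot (A : 'M[R]_m) x i : (A *m x) i 0 = dot (row i A)^T x.
Proof. by rewrite /dotv mxE; apply: eq_bigr => j _; rewrite !mxE. Qed.

Lemma opn_bnd (A : 'M[R]_m) x : dot x x = 1 ->
  vnorm (A *m x) <= Num.sqrt (\sum_i dot (row i A)^T (row i A)^T).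
Proof.
move=> hx; rewrite /vnorm ler_sqrt ?sumr_ge0 // => [|i _]; last exact: dotv_ge0.
rewrite {1}/dotv; apply: ler_sum => i _; rewrite entry_dot -expr2.
by have := CS (row i A)^T x; rewrite hx mulr1.
Qed.

Lemma opn_ub (A : 'M[R]_m) x (x0 : 'cV[R]_m) : vnorm x0 = 1 -> vnorm x = 1 ->
  vnorm (A *m x) <= opnorm A.
Proof.
move=> h0 h1; apply: sup_upper_bound; last by exists x.
split; first by exists (vnorm (A *m x0)), x0.
exists (Num.sqrt (\sum_i dot (row i A)^T (row i A)^T)) => _ [y hy <-].
by apply: opn_bnd; rewrite -vnorm_sq hy expr1n.
Qed.

Lemma opn_le (A : 'M[R]_m) c (x0 : 'cV[R]_m) : vnorm x0 = 1 ->
  (forall x, vnorm x = 1 -> vnorm (A *m x) <= c) -> opnorm A <= c.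
Proof.
move=> h0 hc; apply: ge_sup; first by exists (vnorm (A *m x0)), x0.
by move=> _ [y hy <-]; exact: hc.
Qed.

Lemma opn_gen (A : 'M[R]_m) c (x0 : 'cV[R]_m) : vnorm x0 = 1 -> opnorm A <= c ->
  forall v, vnorm (A *m v) <= c * vnorm v.
Proof.
move=> h0 hc v; have [v0|vn0] := eqVneq (dot v v) 0.
  rewrite (dotv_eq0 v0) mulmx0 /vnorm dotv0l.
  by rewrite sqrtr0 mulr0.
have vp : 0 < vnorm v by rewrite /vnorm sqrtr_gt0 lt_def vn0 dotv_ge0.
set v' := (vnorm v)^-1 *: v.
have hv' : vnorm v' = 1 by rewrite /v' vnormZ ger0_norm ?invr_ge0 ?ltW // mulVf // gt_eqF.
have -> : v = vnorm v *: v' by rewrite /v' scalerA divff ?scale1r // gt_eqF.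
rewrite -scalemxAr (vnormZ _ (A *m v')) (vnormZ _ v') hv' (ger0_norm (vnorm_ge0 v)) mulr1 mulrC ler_wpM2r ?vnorm_ge0 //.
exact: le_trans (opn_ub _ h0 hv') hc.
Qed.

End Opn.

Section Spec.
Variables (R : realType) (n : nat) (Q : 'M[R]_n.+2) (lam : 'I_n.+2 -> R).
Local Notation dot := (@dotv R n.+2).
Hypothesis HQ : Q^T *m Q = 1%:M.

Lemma dot_delta (v : 'cV[R]_n.+2) i : dot (delta_mx i 0) v = v i 0.
Proof.
rewrite /dotv (bigD1 i) //= big1 => [|j /negPf ne]; rewrite !mxE ?eqxx ?ne /=.
  by rewrite mul1r addr0.
by rewrite mul0r.
Qed.

Lemma dotQ (A : 'M[R]_n.+2) v w : A^T *m A = 1%:M -> dot (A *m v) (A *m w) = dot v w.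
Proof. by move=> h; rewrite dotv_mulmx mulmxA h mul1mx. Qed.


Local Notation D := (diag_mx (\row_(i < n.+2) lam i)).

Lemma Dentry (v : 'cV[R]_n.+2) i : (D *m v) i 0 = lam i * v i 0.
Proof. by rewrite mul_diag_mx !mxE. Qed.

Lemma Dbound (k : R) (v : 'cV[R]_n.+2) : (forall i, v i 0 != 0 -> lam i ^+ 2 <= k ^+ 2) ->
  dot (D *m v) (D *m v) <= k ^+ 2 * dot v v.
Proof.
move=> h; rewrite /dotv mulr_sumr; apply: ler_sum => i _; rewrite Dentry.
have [->|nz] := eqVneq (v i 0) 0; first by rewrite !mulr0.
have := h i nz => hl.
have : lam i ^+ 2 * (v i 0 * v i 0) <= k ^+ 2 * (v i 0 * v i 0).
  by apply: ler_wpM2r => //; rewrite -expr2 sqr_ge0.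
by rewrite -!expr2 -exprMn.
Qed.

End Spec.
Lemma int_le (d : measure_display) (T : measurableType d) (R : realType)
  (P : probability T R) (f : T -> R) (c : R) (Q : T -> Prop) :
  {ae P, forall w, Q w} -> 0 <= c ->
  (forall w, 0 <= f w) -> (forall w, f w <= 1) -> (forall w, Q w -> f w <= c) ->
  (\int[P]_w (f w)%:E <= c%:E)%E.
Proof.
move=> [N [mN PN sN]] c0 f0 f1 fQ.
set g := fun w => ((cst c%:E) w + (\1_N w)%:E)%E.
have fg : forall w, ((f w)%:E <= g w)%E.
  move=> w; rewrite /g /=; have [Nw|nNw] := pselect (N w).
    rewrite indicE mem_set // -EFinD lee_fin.
have := f1 w; rewrite [true%:R]/= => h; lra.
  have Qw : Q w.
    by apply: contrapT => nQ; apply: nNw; exact: sN.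
  rewrite indicE memNset // -EFinD lee_fin addr0; exact: fQ.
have hg : (\int[P]_w g w = c%:E)%E.
  rewrite ge0_integralD //.
  - rewrite integral_cst // integral_indic // setIT.
    rewrite [X in (_ * X + _)%E](_ : _ = 1%E); last exact: probability_setT.
    by rewrite [X in (_ + X)%E](_ : _ = 0%E) ?mule1 ?adde0 //; exact: PN.
  - by apply/measurable_realfun.measurable_EFinP; exact: measurable_realfun.measurable_indic.
have g0 : forall w, (0 <= g w)%E.
  by move=> w; rewrite /g -EFinD lee_fin addr_ge0 // indicE; case: (w \in N).
have f0' : forall w, (0 <= (f w)%:E)%E by move=> w; rewrite lee_fin.
rewrite -hg !ge0_integralTE //.
apply: le_ereal_sup => _ [h hf <-]; exists h => //= w.
exact: le_trans (hf w) (fg w).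
Qed.
Lemma sqrt_le_iff (R : realType) (t r : R) : 0 <= r -> (Num.sqrt t <= r) = (t <= r ^+ 2).
Proof. by move=> h; rewrite -{1}(ger0_norm h) -sqrtr_sqr ler_sqrt // sqr_ge0. Qed.

Theorem lemma5p2 (d : measure_display) (T : measurableType d) (R : realType)
  (P : probability T R) (n : nat)
  (M : 'M[R]_n.+2) (Q : 'M[R]_n.+2) (lam : 'I_n.+2 -> R)
  (theta : R) (S : T -> 'M[R]_n.+2) :
  M^T = M ->
  Q^T *m Q = 1%:M ->
  M = Q *m diag_mx (\row_i lam i) *m Q^T ->
  (forall i j : 'I_n.+2, (i <= j)%N -> `|lam j| <= `|lam i|) ->
  0 < lam 0 ->
  `|lam 1| < lam 0 ->
  let u := col 0 Q in
  let l2 := `|lam 1| / lam 0 in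
  0 < theta ->
  theta <= Num.sqrt ((1 - l2) ^+ 3) / 40 ->
  (forall i j, measurable_fun setT (fun w => S w i j)) ->
  (forall i j, (\int[P]_w (S w i j)%:E = (M i j)%:E)%E) ->
  {ae P, forall w, opnorm (S w - M) <= theta * opnorm M} ->
  {ae P, forall w, S w \in unitmx} ->
  (forall V : 'M[R]_n.+2, nontriv_proper_subsp V ->
     ~ {ae P, forall w, invariant_sub V (S w)}) ->
  let G := fun x : 'cV[R]_n.+2 => unitv x /\ pdist x u <= 2 * theta / (1 - l2) in
  {ae P, forall w, forall x, G x -> G (pact (S w) x)} /\
  let rho := 1 - 4 / 5 * (1 - l2) in
  (0 < rho < 1) /\
  (forall x y, G x -> G y -> x <> y -> x <> - y ->
     (\int[P]_w (pdist (pact (S w) x) (pact (S w) y))%:E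
        <= (rho * pdist x y)%:E)%E).
Proof.
move=> HMs HQ HM Hord Hlam Hl1' u l2 Hth Hth40' _ _ Hae _ _ G.
have hQ' : Q *m Q^T = 1%:M := mulmx1C HQ.
pose e0 : 'cV[R]_n.+2 := delta_mx 0 0.
have hu : u = Q *m e0 by rewrite /u colE.
have Hu : dotv u u = 1 by rewrite hu dotQ // dot_delta mxE !eqxx.
have vu : vnorm u = 1 by rewrite /vnorm Hu sqrtr1.
have hMv v : M *m v = Q *m (diag_mx (\row_(i < n.+2) lam i) *m (Q^T *m v)).
  by rewrite HM !mulmxA.
have hDe0 : diag_mx (\row_(i < n.+2) lam i) *m e0 = lam 0 *: e0.
  apply/matrixP => i j; rewrite ord1 Dentry !mxE.
  by case: eqP => [->|]; rewrite /= ?mulr1 ?mulr0.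
have HMu : M *m u = lam 0 *: u.
  by rewrite hMv hu (mulmxA Q^T) HQ mul1mx hDe0 -scalemxAr.
have hMn v : dotv (M *m v) (M *m v) =
   dotv (diag_mx (\row_(i < n.+2) lam i) *m (Q^T *m v))
        (diag_mx (\row_(i < n.+2) lam i) *m (Q^T *m v)).
  by rewrite hMv dotQ.
have hQt v : dotv (Q^T *m v) (Q^T *m v) = dotv v v by rewrite dotQ // trmxK.
have Hl0 : 0 <= l2 by rewrite /l2 divr_ge0 // ltW.
have Hl1 : l2 < 1 by rewrite /l2 ltr_pdivrMr // mul1r.
have hl2lam : l2 * lam 0 = `|lam 1| by rewrite /l2 divfK // gt_eqF.
have HMp : forall z, dotv z u = 0 -> vnorm (M *m z) <= l2 * lam 0 * vnorm z.
  move=> z hz; rewrite hl2lam /vnorm hMn -[X in _ <= X * _](sqrtr_sqr (lam 1)).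
  rewrite -sqrtrM ?sqr_ge0 // ler_sqrt ?(mulr_ge0 (sqr_ge0 _) (dotv_ge0 _)) //.
  rewrite -(hQt z); apply: Dbound => i hi.
  have i0 : i != 0.
    apply: contraNneq hi => ->; rewrite -dot_delta -/e0.
    by rewrite -dotv_mulmx -hu dotvC hz.
  have hi1 : (nat_of_ord (1%R : 'I_n.+2) <= i)%N.
    by rewrite /= lt0n; move: i0; apply: contra => /eqP h; apply/eqP/val_inj.
  have := Hord _ _ hi1; rewrite -(sqnormG (lam i)) -(sqnormG (lam 1)) => h.
  by apply: sq_le => //; exact: normr_ge0.
have HMall : forall v, vnorm (M *m v) <= lam 0 * vnorm v.
  move=> v; rewrite /vnorm hMn -[X in _ <= X * _](ger0_norm (ltW Hlam)).
  rewrite -[X in _ <= X * _]sqrtr_sqr.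
  rewrite -sqrtrM ?sqr_ge0 // ler_sqrt ?(mulr_ge0 (sqr_ge0 _) (dotv_ge0 _)) //.
  rewrite -(hQt v); apply: Dbound => i _.
  have := Hord 0 i (leq0n _); rewrite -(sqnormG (lam i)) -(sqnormG (lam 0)) => h.
  by apply: sq_le => //; exact: normr_ge0.
have opM : opnorm M <= lam 0.
  by apply: (opn_le vu) => x hx; have := HMall x; rewrite hx mulr1.
have HEgen : forall E : 'M[R]_n.+2, opnorm E <= theta * opnorm M ->
    forall v, vnorm (E *m v) <= theta * lam 0 * vnorm v.
  move=> E hE; apply: (opn_gen vu); apply: le_trans hE _.
  by rewrite ler_wpM2l // ltW.
set r := 2 * theta / (1 - l2).
have d0 : 0 < 1 - l2 by rewrite subr_gt0.
have Hr : r * (1 - l2) = 2 * theta by rewrite /r divfK // gt_eqF.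
set X := Num.sqrt ((1 - l2) ^+ 3).
rewrite -/X in Hth40'.
have X0 : 0 <= X := sqrtr_ge0 _.
have XX : X ^+ 2 = (1 - l2) ^+ 3 by rewrite sqr_sqrtr // exprn_ge0 // ltW.
have Xd : X <= 1 - l2.
  rewrite /X sqrt_le_iff; last exact: ltW.
  have h2 : 0 <= (1 - l2) ^+ 2 * l2 by rewrite mulr_ge0 ?sqr_ge0.
  have -> : (1 - l2) ^+ 3 = (1 - l2) ^+ 2 - (1 - l2) ^+ 2 * l2 by ring.
  lra.
have Hth40 : theta <= (1 - l2) / 40 by lra.
have Hr2 : r ^+ 2 <= (1 - l2) / 400.
  have t2 : theta ^+ 2 <= X ^+ 2 / 1600.
    have -> : X ^+ 2 / 1600 = (X / 40) ^+ 2 by field.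
    by apply: sq_le => //; exact: ltW.
  have e : (r * (1 - l2)) ^+ 2 = 4 * theta ^+ 2 by rewrite Hr; ring.
  have : r ^+ 2 * (1 - l2) ^+ 2 <= (1 - l2) / 400 * (1 - l2) ^+ 2.
    rewrite -exprMn e; rewrite XX in t2.
    have -> : (1 - l2) / 400 * (1 - l2) ^+ 2 = 4 * ((1 - l2) ^+ 3 / 1600) by field.
    by rewrite ler_wpM2l.
  by rewrite ler_pM2r // exprn_gt0.
have r0 : 0 <= r by rewrite /r divr_ge0 // ?mulr_ge0 // ltW.
have Gequiv : forall x, G x <-> inG u r x.
  move=> x; rewrite /G /inG /unitv /pdist -/r sqrt_le_iff //.
  split=> [[h1 h2]|[h1 h2]]; split => //.
    by rewrite -vnorm_sq h1 expr1n.
  exact: vnorm1.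
have Hsplit : forall w, S w = M + (S w - M) by move=> w; rewrite addrC subrK.
split.
  apply: filterS Hae => w hw x /Gequiv Gx; apply/Gequiv.
  rewrite (Hsplit w).
  exact: (geo1' Hu HMs HMu HMp (HEgen _ hw) Hl0 Hl1 Hth Hr Hth40 Hr2 Hlam Gx).
move=> rho.
have rho0 : 0 < rho by rewrite /rho; lra.
split; first by apply/andP; split; rewrite /rho; lra.
move=> x y /Gequiv Gx /Gequiv Gy _ _.
apply: (int_le Hae).
- by apply: mulr_ge0; [exact: ltW | exact: sqrtr_ge0].
- by move=> w; exact: sqrtr_ge0.
- move=> w; rewrite /pdist sqrt_le_iff // expr1n; have := sqr_ge0 (dotv (pact (S w) x) (pact (S w) y)); lra.
move=> w hw; rewrite (Hsplit w).
have h := geo2 Hu HMs HMu HMp (HEgen _ hw) Hl0 Hl1 Hth Hr Hth40 Hr2 Hlam Gx Gy.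
have K0 : 0 <= 1 - dotv x y ^+ 2.
  by have := CS x y; case: Gx => -> _; case: Gy => -> _; rewrite mulr1 subr_ge0.
rewrite /pdist sqrt_le_iff; last by apply: mulr_ge0; [exact: ltW | exact: sqrtr_ge0].
rewrite exprMn sqr_sqrtr //.
Qed.
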